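(* Let $\mu>0$ and let $\mathcal{D}_\mu$ be the collection of all mixed Poisson random variables $D$ with $\mathbb{E}(D)=\mu$. Let $\mu_c$ be the largest real root of $2x=e^{x-1/2}$ ($\mu_c\approx 1.756$). Let $X^*$ be the random variable with $$\mathbb{P}(X^*=\max(\mu,\mu_c))=1-\mathbb{P}(X^*=0)=\min(1,\mu/\mu_c),$$ and let $D^*$ be mixed Poisson$(X^* )$. Then $$\min_{D\in\mathcal{D}_\mu} q_D=q_{D^*}.$$
   Context: For a non-negative real random variable $X$, a random variable $D$ is mixed Poisson$(X)$ if $\mathbb{P}(D=k)=\mathbb{E}\big(\tfrac{X^k}{k!}e^{-X}\big)$ for $k\in\{0,1,2,\dots\}$; then $\mathbb{E}(D)=\mathbb{E}(X)=:\mu_X$. For an $\{0,1,2,\dots\}$-valued random variable $D$ with $0<\mu_D=\mathbb{E}(D)<\infty$, its generating function is $f_D(s)=\mathbb{E}(s^D)$, $s\in[0,1]$, and $\bar f_D(s)=f_D'(s)/\mu_D=\sum_{k\ge1}\frac{k\mathbb{P}(D=k)}{\mu_D}s^{k-1}$ (the generating function of $\bar D-1$, where $\bar D$ is the size-biased version of $D$). For $D$ mixed Poisson$(X)$ one has $f_D(s)=\mathbb{E}(e^{-(1-s)X})$ and $\bar f_D(s)=\mathbb{E}(Xe^{-(1-s)X})/\mu_X$. $z_D$ denotes the smallest root in $[0,1]$ of $s=\bar f_D(s)$, and $q_D:=f_D(z_D)$. (In the Poissonian random graph with i.i.d. vertex weights distributed as $X$, $1-q_D$ is the limiting fraction of vertices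 in the largest component.) *)

(* Defs.v *)
From Stdlib Require Import Reals Lra List ClassicalEpsilon Factorial.
Open Scope R_scope.

Record prob_space := {
  Omega : Type;
  meas : (Omega -> Prop) -> Prop;
  Pr : (Omega -> Prop) -> R;
  meas_full : meas (fun _ => True);
  meas_compl : forall A, meas A -> meas (fun w => ~ A w);
  meas_cunion : forall A : nat -> Omega -> Prop,
      (forall n, meas (A n)) -> meas (fun w => exists n, A n w);
  Pr_nonneg : forall A, meas A -> 0 <= Pr A;
  Pr_full : Pr (fun _ => True) = 1;
  Pr_sigma_additive : forall A : nat -> Omega -> Prop,
      (forall n, meas (A n)) ->
      (forall m n w, m <> n -> A m w -> A n w -> False) ->
      infinite_sum (fun n => Pr (A n)) (Pr (fun w => exists n, A n w))
}.

Definition random_variable (P : prob_space) (X : Omega P -> R) : Prop :=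
  forall a : R, meas P (fun w => X w <= a).

Definition indic {T : Type} (A : T -> Prop) (w : T) : R :=
  if excluded_middle_informative (A w) then 1 else 0.

Definition simple_val {T : Type} (s : list (R * (T -> Prop))) (w : T) : R :=
  fold_right (fun p acc => fst p * indic (snd p) w + acc) 0 s.

Definition simple_int (P : prob_space) (s : list (R * (Omega P -> Prop))) : R :=
  fold_right (fun p acc => fst p * Pr P (snd p) + acc) 0 s.

(* Lebesgue integral of a nonnegative function Y: supremum of integrals of
   nonnegative simple functions below Y.  [expect_is P Y l] means E(Y) = l
   (finite). *)
Definition expect_is (P : prob_space) (Y : Omega P -> R) (l : R) : Prop :=
  is_lub (fun r => exists s : list (R * (Omega P -> Prop)),
              (forall p, In p s -> 0 <= fst p /\ meas P (snd p)) /\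
              (forall w, simple_val s w <= Y w) /\
              r = simple_int P s) l.

(* p : nat -> R is the probability mass function of a mixed Poisson(X)
   random variable D:  P(D = k) = E(X^k/k! e^{-X}). *)
Definition mixed_poisson_pmf (P : prob_space) (X : Omega P -> R) (p : nat -> R) : Prop :=
  forall k : nat, expect_is P (fun w => X w ^ k / INR (fact k) * exp (- X w)) (p k).

Definition pmf_mean (p : nat -> R) (m : R) : Prop :=
  infinite_sum (fun k => INR k * p k) m.

Definition gen_fun (p : nat -> R) (s v : R) : Prop :=
  infinite_sum (fun k => p k * s ^ k) v.

Definition sb_gen_fun (p : nat -> R) (muD s v : R) : Prop :=
  infinite_sum (fun k => INR (S k) * p (S k) / muD * s ^ k) v.

Definition is_qD (p : nat -> R) (q : R) : Prop :=
  exists muD z : R,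
    pmf_mean p muD /\
    0 <= z <= 1 /\ sb_gen_fun p muD z z /\
    (forall s, 0 <= s <= 1 -> sb_gen_fun p muD s s -> z <= s) /\
    gen_fun p z q.

Definition in_D_mu (mu : R) (p : nat -> R) : Prop :=
  exists (P : prob_space) (X : Omega P -> R),
    random_variable P X /\ (forall w, 0 <= X w) /\
    mixed_poisson_pmf P X p /\ pmf_mean p mu.

(* Main.v *)
Require Import Defs.
From Stdlib Require Import Reals Lra Lia Psatz List Classical ClassicalEpsilon FunctionalExtensionality PropExtensionality Factorial.
Open Scope R_scope.

Lemma dl_plus f g x a b : derivable_pt_lim f x a -> derivable_pt_lim g x b ->
  derivable_pt_lim (fun y => f y + g y) x (a + b).
Proof. intros; exact (derivable_pt_lim_plus f g x a b H H0). Qed.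
Lemma dl_minus f g x a b : derivable_pt_lim f x a -> derivable_pt_lim g x b ->
  derivable_pt_lim (fun y => f y - g y) x (a - b).
Proof. intros; exact (derivable_pt_lim_minus f g x a b H H0). Qed.
Lemma dl_mult f g x a b : derivable_pt_lim f x a -> derivable_pt_lim g x b ->
  derivable_pt_lim (fun y => f y * g y) x (a * g x + f x * b).
Proof. intros; exact (derivable_pt_lim_mult f g x a b H H0). Qed.
Lemma dl_const c x : derivable_pt_lim (fun _ => c) x 0.
Proof. exact (derivable_pt_lim_const c x). Qed.
Lemma dl_id x : derivable_pt_lim (fun y => y) x 1.
Proof. exact (derivable_pt_lim_id x). Qed.
Lemma dl_ext f g x a b : (forall y, f y = g y) -> a = b -> derivable_pt_lim f x a ->
  derivable_pt_lim g x b.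
Proof.
  intros Hfg -> H. unfold derivable_pt_lim in *. intros e He.
  destruct (H e He) as [d Hd]. exists d. intros h Hh Hh'.
  rewrite <- !Hfg. apply Hd; auto.
Qed.
Lemma dl_explin c d x : derivable_pt_lim (fun y => exp (c * y + d)) x (c * exp (c * x + d)).
Proof.
  assert (Hm : derivable_pt_lim (fun y => c * y) x c).
  { eapply dl_ext; [| | apply (dl_mult (fun _ => c) (fun y => y) x 0 1)].
    intro; reflexivity. ring. apply dl_const. apply dl_id. }
  assert (Hlin : derivable_pt_lim (fun y => c * y + d) x c).
  { eapply dl_ext; [| | apply (dl_plus (fun y => c * y) (fun _ => d) x c 0)]. intro; reflexivity. ring. exact Hm. apply dl_const. }
  assert (H := derivable_pt_lim_comp (fun y => c * y + d) exp x c (exp (c*x+d)) Hlin (derivable_pt_lim_exp _)).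
  eapply dl_ext; [| | exact H]. intro; reflexivity. ring.
Qed.

Lemma dl_expneg x : derivable_pt_lim (fun y => exp (- y)) x (- exp (- x)).
Proof.
  eapply dl_ext. 3: apply (dl_explin (-1) 0 x).
  - intro y; cbv beta; replace (-1 * y + 0) with (- y) by ring; reflexivity.
  - replace (-1 * x + 0) with (- x) by ring. ring.
Qed.

Lemma mono_up f f' a b : a <= b ->
  (forall c, a <= c <= b -> derivable_pt_lim f c (f' c)) ->
  (forall c, a < c < b -> 0 <= f' c) -> f a <= f b.
Proof.
  intros Hab Hd Hp. destruct (Req_dec a b) as [->|Hne]; [lra|].
  destruct (MVT_cor2 f f' a b ltac:(lra) Hd) as [c [Hc1 Hc2]].
  specialize (Hp c Hc2). nra.
Qed.
Lemma mono_down f f' a b : a <= b ->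
  (forall c, a <= c <= b -> derivable_pt_lim f c (f' c)) ->
  (forall c, a < c < b -> f' c <= 0) -> f b <= f a.
Proof.
  intros Hab Hd Hp. destruct (Req_dec a b) as [->|Hne]; [lra|].
  destruct (MVT_cor2 f f' a b ltac:(lra) Hd) as [c [Hc1 Hc2]].
  specialize (Hp c Hc2). nra.
Qed.

Lemma exp_neg_mul x : exp x * exp (- x) = 1.
Proof. rewrite <- exp_plus. replace (x + - x) with 0 by ring. apply exp_0. Qed.

Lemma V_nonneg h : 0 <= h -> (2 - h) * exp h <= 2 + h.
Proof.
  intro Hh.
  assert (H := mono_up (fun x => 2 + x - (2 - x) * exp x)
                 (fun x => 1 - (1 - x) * exp x) 0 h Hh).
  cbv beta in H; rewrite exp_0 in H.
  cut (0 <= 2 + h - (2 - h) * exp h); [lra|].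
  replace 0 with (2 + 0 - (2 - 0) * 1) by ring. apply H.
  - intros c _.
    eapply dl_ext; [| | apply (dl_minus (fun y => 2 + y) (fun y => (2 - y) * exp y) c 1 (-1 * exp c + (2 - c) * exp c))].
    + intro; reflexivity.
    + ring.
    + eapply dl_ext; [| | apply (dl_plus (fun _ => 2) (fun y => y) c 0 1)]; [intro; reflexivity| ring | apply dl_const | apply dl_id].
    + apply dl_mult.
      * eapply dl_ext; [| | apply (dl_minus (fun _ => 2) (fun y => y) c 0 1)]; [intro; reflexivity| ring | apply dl_const | apply dl_id].
      * apply derivable_pt_lim_exp.
  - intros c Hc. destruct (Rle_dec 1 c).
    + assert (0 < exp c) by apply exp_pos. nra.
    + assert (H1 := exp_ineq1_le (- c)). assert (H2 := exp_neg_mul c).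
      assert (0 < exp c) by apply exp_pos. nra.
Qed.

Lemma W_pos a h : 2 <= a -> 0 <= h -> 0 <= a * (exp (- h) - 1 + h) - h * (1 - exp (- h)).
Proof.
  intros Ha Hh. assert (HV := V_nonneg h Hh). assert (H2 := exp_neg_mul h).
  assert (H3 := exp_ineq1_le (- h)). assert (0 < exp (-h)) by apply exp_pos.
  assert (0 < exp h) by apply exp_pos.
  assert (2 - h <= (2 + h) * exp (- h)).
  { replace (2 - h) with ((2 - h) * exp h * exp (-h)) by (rewrite Rmult_assoc, H2; ring).
    apply Rmult_le_compat_r; lra. }
  nra.
Qed.

Lemma m_decr r s : 0 <= r <= s -> r * (1 - exp (- s)) <= s * (1 - exp (- r)).
Proof.
  intros [Hr Hrs].
  assert (H := mono_up (fun x => x * (1 - exp (- r)) - r * (1 - exp (- x)))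
                 (fun x => (1 - exp (- r)) - r * exp (- x)) r s Hrs).
  cut (0 <= s * (1 - exp (- r)) - r * (1 - exp (- s))); [lra|].
  replace 0 with (r * (1 - exp (- r)) - r * (1 - exp (- r))) by ring. apply H.
  - intros c _.
    eapply dl_ext; [| | apply (dl_minus (fun x => x * (1 - exp (- r))) (fun x => r * (1 - exp (- x))) c (1 * (1 - exp (-r)) + c * 0) (0 * (1 - exp (-c)) + r * (0 - (- exp (- c)))))].
    + intro; reflexivity.
    + ring.
    + apply (dl_mult (fun x => x) (fun _ => 1 - exp (-r))). apply dl_id. apply dl_const.
    + apply (dl_mult (fun _ => r) (fun x => 1 - exp (- x))). apply dl_const.
      apply (dl_minus (fun _ => 1) (fun y => exp (- y))); [apply dl_const | apply dl_expneg].
  - intros c Hc. simpl.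
    assert (exp (- c) <= exp (- r)).
    { destruct (Req_dec c r); [subst; lra|]. left; apply exp_increasing; lra. }
    assert (H1 := exp_ineq1_le r). assert (H2 := exp_neg_mul r).
    assert (0 < exp (-r)) by apply exp_pos.
    assert (1 - exp (-r) - r * exp (-r) >= 0).
    { assert (E : exp (-r) * (exp r - 1 - r) = 1 - exp (-r) - r * exp (-r)).
      { replace (exp (-r) * (exp r - 1 - r)) with (exp r * exp (-r) - exp(-r) - r * exp(-r)) by ring.
        rewrite H2; ring. }
      rewrite <- E. apply Rle_ge, Rmult_le_pos; lra. }
    nra.
Qed.

Definition kap a s := (a - 1) * (1 - exp (- s)) - s.

Lemma kappa_down a r s : 1 <= a -> 0 <= r <= s -> 0 <= kap a s -> 0 <= kap a r.
Proof.
  intros Ha Hrs Hk. unfold kap in *. assert (Hm := m_decr r s Hrs).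
  destruct (Req_dec s 0) as [Hs|Hs].
  - assert (r = 0) by lra. subst. replace (- 0) with 0 by ring. rewrite exp_0. lra.
  - assert (Hs' : 0 < s) by lra.
    apply Rmult_le_reg_l with s; [lra|]. rewrite Rmult_0_r.
    assert (0 <= r * ((a - 1) * (1 - exp (- s)) - s)) by (apply Rmult_le_pos; lra).
    nra.
Qed.

Lemma kappa_up a s r : 1 <= a -> 0 < s <= r -> kap a s <= 0 -> kap a r <= 0.
Proof.
  intros Ha Hsr Hk. unfold kap in *. assert (Hm := m_decr s r ltac:(lra)).
  apply Rmult_le_reg_l with s; [lra|]. rewrite Rmult_0_r.
  assert (r * ((a - 1) * (1 - exp (- s)) - s) <= 0).
  { apply Rmult_le_0_r_reg with (-1) || idtac. nra. }
  nra.
Qed.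

Definition Uf a s := a * (exp s - 1 - s) - s * (exp s - 1).

Lemma Uf_deriv a c : derivable_pt_lim (Uf a) c (exp c * kap a c).
Proof.
  unfold Uf, kap.
  eapply dl_ext.
  3: apply (dl_minus (fun s => a * (exp s - 1 - s)) (fun s => s * (exp s - 1)) c
             (0 * (exp c - 1 - c) + a * (exp c - 0 - 1)) (1 * (exp c - 1) + c * (exp c - 0))).
  - intro; reflexivity.
  - assert (H := exp_neg_mul c). 
    replace (exp c * ((a - 1) * (1 - exp (- c)) - c)) with
      ((a - 1) * exp c - (a - 1) * (exp c * exp (- c)) - c * exp c) by ring.
    rewrite H. ring.
  - apply (dl_mult (fun _ => a) (fun s => exp s - 1 - s)). apply dl_const.
    apply (dl_minus (fun s => exp s - 1) (fun s => s)). 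
    apply (dl_minus (fun s => exp s) (fun _ => 1)). apply derivable_pt_lim_exp. apply dl_const.
    apply dl_id.
  - apply (dl_mult (fun s => s) (fun s => exp s - 1)). apply dl_id.
    apply (dl_minus (fun s => exp s) (fun _ => 1)). apply derivable_pt_lim_exp. apply dl_const.
Qed.

Lemma U_nonneg y0 s : 1 <= y0 -> 1 + 2 * y0 <= exp y0 -> 0 <= s <= y0 ->
  0 <= Uf (exp y0 - 1) s.
Proof.
  intros Hy0 He Hs. set (a := exp y0 - 1).
  assert (Ha : 1 <= a) by (unfold a; lra).
  assert (HU0 : Uf a 0 = 0) by (unfold Uf; rewrite exp_0; ring).
  destruct (Rle_dec 0 (kap a s)) as [Hk|Hk].
  - rewrite <- HU0. apply (mono_up (Uf a) (fun c => exp c * kap a c) 0 s); [lra| |].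
    + intros; apply Uf_deriv.
    + intros c Hc. apply Rmult_le_pos. left; apply exp_pos.
      apply (kappa_down a c s); lra.
  - assert (Hs0 : 0 < s).
    { destruct (Req_dec s 0) as [->|]; [|lra]. exfalso; apply Hk. unfold kap.
      replace (- 0) with 0 by ring. rewrite exp_0. lra. }
    apply Rle_trans with (Uf a y0).
    + unfold Uf, a. 
      replace ((exp y0 - 1) * (exp y0 - 1 - y0) - y0 * (exp y0 - 1)) with
        ((exp y0 - 1) * (exp y0 - 1 - 2 * y0)) by ring.
      apply Rmult_le_pos; lra.
    + apply (mono_down (Uf a) (fun c => exp c * kap a c) s y0); [lra| |].
      * intros; apply Uf_deriv.
      * intros c Hc. assert (0 < exp c) by apply exp_pos.
        assert (kap a c <= 0) by (apply (kappa_up a s c); lra). nra.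
Qed.

Lemma W_all y0 h : 1 <= y0 -> 1 + 2 * y0 <= exp y0 -> - y0 <= h ->
  0 <= (exp y0 - 1) * (exp (- h) - 1 + h) - h * (1 - exp (- h)).
Proof.
  intros Hy0 He Hh. destruct (Rle_dec 0 h).
  - apply W_pos; lra.
  - assert (HU := U_nonneg y0 (- h) Hy0 He ltac:(lra)). unfold Uf in HU.
    replace (- - h) with h in HU by ring. nra.
Qed.

Lemma PW y0 y : 1 <= y0 -> 1 + 2 * y0 <= exp y0 -> 0 <= y ->
  let E := exp y0 in let D := E - 1 - y0 in let t := 1 - exp (- y0) in
  1 - exp (- y) <= t * (E - 1 - 2 * y0) / D + (2 * t / D) * y + (- / D) * y * (1 - exp (- y)).
Proof.
  intros Hy0 He Hy E D t.
  assert (HE : 0 < E) by apply exp_pos.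
  assert (HD : 0 < D) by (unfold D, E; lra).
  assert (HW := W_all y0 (y - y0) Hy0 He ltac:(lra)).
  assert (Hx : exp (- (y - y0)) = exp (- y) * E).
  { unfold E; rewrite <- exp_plus; f_equal; ring. }
  assert (Ht : t = 1 - / E) by (unfold t, E; rewrite exp_Ropp; reflexivity).
  rewrite Hx in HW. fold E in HW.
  set (u := exp (- y)) in *.
  cut (0 <= (t * (E - 1 - 2 * y0) / D + 2 * t / D * y + - / D * y * (1 - u)) - (1 - u)); [lra|].
  replace ((t * (E - 1 - 2 * y0) / D + 2 * t / D * y + - / D * y * (1 - u)) - (1 - u)) with
    (((E - 1) * (u * E - 1 + (y - y0)) - (y - y0) * (1 - u * E)) / (E * D)).
  - apply Rmult_le_pos; [exact HW|]. left; apply Rinv_0_lt_compat; nra.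
  - rewrite Ht. unfold D. field. unfold D in HD. lra.
Qed.

Lemma dl_cont f x l : derivable_pt_lim f x l -> continuity_pt f x.
Proof. intro H. exact (derivable_continuous_pt f x (exist _ l H)). Qed.

Definition fmu x := 2 * x - exp (x - 1/2).

Lemma fmu_cont : continuity fmu.
Proof.
  intro x. apply (dl_cont _ x (2 * 1 - 1 * exp (1 * x + - (1/2)))).
  unfold fmu. eapply dl_ext. 3: apply (dl_minus (fun x => 2 * x) (fun x => exp (1 * x + - (1/2)))).
  - intro y. cbv beta. replace (1 * y + - (1/2)) with (y - 1/2) by ring. reflexivity.
  - reflexivity.
  - eapply dl_ext. 3: apply (dl_mult (fun _ => 2) (fun y => y) x 0 1).
    intro; reflexivity. ring. apply dl_const. apply dl_id.
  - apply dl_explin.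
Qed.

Lemma exp_sq x : exp x = exp (x/2) * exp (x/2).
Proof. rewrite <- exp_plus. f_equal. field. Qed.

Lemma fmu_neg x : 9/2 <= x -> fmu x <= 0.
Proof.
  intro Hx. unfold fmu. rewrite exp_sq.
  assert (H := exp_ineq1_le ((x - 1/2)/2)). nra.
Qed.

Lemma fmu_15 : 0 <= fmu (3/2).
Proof.
  unfold fmu. replace (3/2 - 1/2) with 1 by field. assert (H := exp_le_3). lra.
Qed.

Lemma muc_ge muc : fmu muc = 0 -> (forall x, fmu x = 0 -> x <= muc) -> 3/2 <= muc.
Proof.
  intros H0 Hmax.
  destruct (IVT_cor fmu (3/2) 5 fmu_cont ltac:(lra)) as [z [Hz1 Hz2]].
  - assert (H1 := fmu_15). assert (H2 := fmu_neg 5 ltac:(lra)). nra.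
  - apply Hmax in Hz2. lra.
Qed.

Lemma root_bound muc y : fmu muc = 0 -> (forall x, fmu x = 0 -> x <= muc) ->
  muc - 1/2 <= y -> 1 + 2 * y <= exp y.
Proof.
  intros H0 Hmax Hy.
  cut (fmu (y + 1/2) <= 0).
  { unfold fmu. replace (y + 1/2 - 1/2) with y by ring. lra. }
  destruct (Rle_dec (fmu (y + 1/2)) 0) as [|Hn]; [assumption|]. exfalso.
  destruct (Rle_dec (9/2) (y + 1/2)). { apply Hn, fmu_neg; lra. }
  destruct (IVT_cor fmu (y + 1/2) 5 fmu_cont ltac:(lra)) as [z [Hz1 Hz2]].
  - assert (H2 := fmu_neg 5 ltac:(lra)). nra.
  - apply Hmax in Hz2. destruct (Req_dec (y + 1/2) muc) as [He|He].
    + apply Hn. rewrite He, H0. lra.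
    + assert (z <= muc) by lra. 
      assert (z = y + 1/2) by lra. subst z. apply Hn. 
      assert (y + 1/2 <= muc) by lra. assert (y + 1/2 = muc) by lra. contradiction.
Qed.

Lemma set_ext {T} (A B : T -> Prop) : (forall w, A w <-> B w) -> A = B.
Proof. intro H. apply functional_extensionality; intro w. apply propositional_extensionality, H. Qed.

Section Prob.
Variable P : prob_space.

Lemma meas_ext (A B : Omega P -> Prop) : (forall w, A w <-> B w) -> meas P A -> meas P B.
Proof. intros H; rewrite (set_ext A B H); auto. Qed.
Lemma Pr_ext (A B : Omega P -> Prop) : (forall w, A w <-> B w) -> Pr P A = Pr P B.
Proof. intros H; rewrite (set_ext A B H); auto. Qed.

Lemma meas_empty : meas P (fun _ => False).
Proof. eapply meas_ext; [| apply meas_compl, meas_full]. simpl; tauto. Qed.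

Lemma meas_union (A B : Omega P -> Prop) : meas P A -> meas P B -> meas P (fun w => A w \/ B w).
Proof.
  intros HA HB. eapply meas_ext; [| apply (meas_cunion P (fun n => match n with 0%nat => A | _ => B end))].
  - intro w; split. intros [n Hn]. destruct n; auto. intros [H|H]. exists 0%nat; auto. exists 1%nat; auto.
  - intro n; destruct n; auto.
Qed.

Lemma meas_inter (A B : Omega P -> Prop) : meas P A -> meas P B -> meas P (fun w => A w /\ B w).
Proof.
  intros HA HB. apply (meas_ext (fun w => ~ ((fun w => ~ A w) w \/ (fun w => ~ B w) w))).
  - intro w; simpl. tauto.
  - apply meas_compl, (meas_union (fun w => ~ A w) (fun w => ~ B w)); apply meas_compl; auto.
Qed.

Lemma meas_diff (A B : Omega P -> Prop) : meas P A -> meas P B -> meas P (fun w => A w /\ ~ B w).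
Proof. intros; apply meas_inter; auto. apply meas_compl; auto. Qed.

Lemma const_sum_zero c : infinite_sum (fun _ => c) c -> c = 0.
Proof.
  intro H. destruct (Req_dec c 0) as [|Hc]; auto. exfalso.
  assert (He : 0 < Rabs c / 2) by (apply Rdiv_lt_0_compat; [apply Rabs_pos_lt; auto | lra]).
  destruct (H _ He) as [N HN].
  assert (H1 := HN N (Nat.le_refl _)). assert (H2 := HN (S N) ltac:(lia)).
  unfold R_dist in *. simpl in H2.
  replace (sum_f_R0 (fun _ => c) N + c - c) with (sum_f_R0 (fun _ => c) N) in H2 by ring.
  set (s := sum_f_R0 (fun _ : nat => c) N) in *.
  apply Rabs_def2 in H1. apply Rabs_def2 in H2.
  destruct (Rcase_abs c); [rewrite Rabs_left in *|rewrite Rabs_right in *]; lra.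
Qed.

Lemma Pr_empty : Pr P (fun _ => False) = 0.
Proof.
  assert (H := Pr_sigma_additive P (fun _ => fun _ => False) (fun _ => meas_empty)
             ltac:(intros; contradiction)).
  cbv beta in H. rewrite (Pr_ext (fun w => exists _ : nat, False) (fun _ => False)) in H.
  - apply const_sum_zero; auto.
  - intro w; split; [intros [_ []]| tauto].
Qed.

Lemma Pr_empty' (A : Omega P -> Prop) : (forall w, ~ A w) -> Pr P A = 0.
Proof. intro H. rewrite <- Pr_empty. apply Pr_ext. intro w; split; [apply H|tauto]. Qed.

Lemma Pr_add (A B : Omega P -> Prop) : meas P A -> meas P B -> (forall w, A w -> B w -> False) ->
  Pr P (fun w => A w \/ B w) = Pr P A + Pr P B.
Proof.
  intros HA HB Hd.
  set (S := fun n : nat => match n with 0%nat => A | 1%nat => B | _ => fun _ => False end).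
  assert (H := Pr_sigma_additive P S).
  cbv beta in H. rewrite (Pr_ext (fun w => exists n, S n w) (fun w => A w \/ B w)) in H.
  - apply (uniqueness_sum (fun n => Pr P (S n))).
    + apply H.
      * intro n; destruct n as [|[|n]]; simpl; auto. apply meas_empty.
      * intros m n w Hmn. destruct m as [|[|m]]; destruct n as [|[|n]]; simpl; intros; try tauto; eauto.
    + intros e He. exists 1%nat. intros n Hn.
      assert (sum_f_R0 (fun n => Pr P (S n)) n = Pr P A + Pr P B).
      { induction n. lia. destruct n. simpl. ring. simpl in *. rewrite IHn by lia.
        rewrite Pr_empty. ring. }
      rewrite H0. unfold R_dist. rewrite Rminus_diag, Rabs_R0. auto.
  - intro w; split. intros [n Hn]. destruct n as [|[|n]]; simpl in Hn; tauto.
    intros [H0|H0]; [exists 0%nat|exists 1%nat]; auto.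
Qed.

Lemma Pr_split (A B : Omega P -> Prop) : meas P A -> meas P B ->
  Pr P A = Pr P (fun w => A w /\ B w) + Pr P (fun w => A w /\ ~ B w).
Proof.
  intros HA HB. rewrite <- Pr_add.
  - apply Pr_ext. intro w. tauto.
  - apply meas_inter; auto.
  - apply meas_diff; auto.
  - intros w; tauto.
Qed.

Lemma Pr_mono (A B : Omega P -> Prop) : meas P A -> meas P B -> (forall w, A w -> B w) ->
  Pr P A <= Pr P B.
Proof.
  intros HA HB Hs. rewrite (Pr_split B A HB HA).
  rewrite (Pr_ext (fun w => B w /\ A w) A) by (intro w; split; [tauto| intro; split; auto]).
  assert (0 <= Pr P (fun w => B w /\ ~ A w)) by (apply Pr_nonneg, meas_diff; auto). lra.
Qed.

Lemma Pr_le1 (A : Omega P -> Prop) : meas P A -> Pr P A <= 1.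
Proof. intro HA. rewrite <- (Pr_full P). apply Pr_mono; auto. apply meas_full. Qed.

Lemma indic_true {T} (A : T -> Prop) w : A w -> indic A w = 1.
Proof. intro H; unfold indic; destruct (excluded_middle_informative (A w)); tauto. Qed.
Lemma indic_false {T} (A : T -> Prop) w : ~ A w -> indic A w = 0.
Proof. intro H; unfold indic; destruct (excluded_middle_informative (A w)); tauto. Qed.

Definition sumind (L : list (Omega P -> Prop)) w := fold_right (fun A acc => indic A w + acc) 0 L.
Definition sumPr (L : list (Omega P -> Prop)) := fold_right (fun A acc => Pr P A + acc) 0 L.

Lemma sumind_nonneg L w : 0 <= sumind L w.
Proof.
  induction L; simpl. lra. unfold indic; destruct (excluded_middle_informative (a w)); lra.
Qed.

Lemma FA (L : list (Omega P -> Prop)) : forall A, Forall (meas P) L -> meas P A ->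
  (forall w, sumind L w = indic A w) -> sumPr L = Pr P A.
Proof.
  induction L as [|B L IH]; intros A HL HA Hs; simpl.
  - symmetry. apply Pr_empty'. intros w Hw. specialize (Hs w). simpl in Hs.
    rewrite indic_true in Hs; auto. lra.
  - inversion HL; subst.
    assert (HBA : forall w, B w -> A w).
    { intros w Hw. specialize (Hs w). simpl in Hs. rewrite indic_true in Hs by auto.
      assert (H0 := sumind_nonneg L w). fold (sumind L w) in Hs.
      destruct (classic (A w)); auto. rewrite indic_false in Hs by auto. lra. }
    rewrite (IH (fun w => A w /\ ~ B w)); auto.
    + rewrite (Pr_split A B HA); auto. f_equal. apply Pr_ext. intro w; split; [intro; split; auto|tauto].
    + apply meas_diff; auto.
    + intro w. specialize (Hs w). simpl in Hs. fold (sumind L w) in Hs.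
      destruct (classic (B w)).
      * rewrite indic_true in Hs by auto. rewrite indic_true in Hs by auto.
        rewrite indic_false by tauto. lra.
      * rewrite indic_false in Hs by auto. replace (sumind L w) with (indic A w) by lra.
        destruct (classic (A w)). rewrite !indic_true; auto. rewrite !indic_false; tauto.
Qed.

Definition valid (s : list (R * (Omega P -> Prop))) :=
  forall p, In p s -> 0 <= fst p /\ meas P (snd p).

Lemma simple_int_nonneg (L : list (R * (Omega P -> Prop))) :
  (forall b, In b L -> meas P (snd b) /\ forall w, snd b w -> 0 <= fst b) -> 0 <= simple_int P L.
Proof.
  induction L as [|b L IH]; intro H; simpl. lra.
  assert (H1 : 0 <= fst b * Pr P (snd b)).
  { destruct (H b (or_introl eq_refl)) as [Hm Hb].
    destruct (classic (exists w, snd b w)) as [[w Hw]|Hn].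
    - apply Rmult_le_pos. apply (Hb w Hw). apply Pr_nonneg; auto.
    - rewrite Pr_empty'. lra. intros w Hw; apply Hn; eauto. }
  assert (0 <= simple_int P L) by (apply IH; intros; apply H; simpl; auto). lra.
Qed.

Definition refine (c : R) (A : Omega P -> Prop) (part : list (R * (Omega P -> Prop))) :=
  flat_map (fun b => (fst b - c, fun w => snd b w /\ A w) :: (fst b, fun w => snd b w /\ ~ A w) :: nil) part.

Lemma partition_lemma (s : list (R * (Omega P -> Prop))) : forall part,
  (forall p, In p s -> meas P (snd p)) ->
  (forall b, In b part -> meas P (snd b)) ->
  (forall w, sumind (map snd part) w = 1) ->
  (forall b, In b part -> forall w, snd b w -> simple_val s w <= fst b) ->
  simple_int P s <= simple_int P part.
Proof.
  induction s as [|[c A] s IH]; intros part Hs Hpm Hpart Hb; simpl.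
  - apply simple_int_nonneg. intros b Hin; split; auto. intros w Hw. apply (Hb b Hin w Hw).
  - assert (HA : meas P A) by (apply (Hs (c, A)); simpl; auto).
    assert (Hr := IH (refine c A part)).
    assert (E1 : simple_int P (refine c A part) =
                 simple_int P part - c * sumPr (map (fun b => fun w => snd b w /\ A w) part)).
    { clear -Hpm HA. induction part as [|b part IHp]; simpl. ring.
      rewrite IHp by (intros; apply Hpm; simpl; auto).
      rewrite (Pr_split (snd b) A) by (auto; apply Hpm; simpl; auto). simpl. ring. }
    assert (E2 : sumPr (map (fun b => fun w => snd b w /\ A w) part) = Pr P A).
    { apply FA; auto.
      - rewrite Forall_forall. intros x Hx. apply in_map_iff in Hx. destruct Hx as [b [<- Hb']].
        apply meas_inter; auto.
      - intro w. rewrite <- (Rmult_1_l (indic A w)). rewrite <- (Hpart w). clear.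
        induction part as [|b part IHp]; simpl. ring. rewrite IHp.
        destruct (classic (snd b w)); destruct (classic (A w));
          [rewrite (indic_true (fun w => _ /\ _)) by tauto|rewrite (indic_false (fun w => _ /\ _)) by tauto ..];
          try rewrite (indic_true (snd b)) by tauto; try rewrite (indic_false (snd b)) by tauto;
          try rewrite (indic_true A) by tauto; try rewrite (indic_false A) by tauto; ring. }
    cut (simple_int P s <= simple_int P (refine c A part)).
    { rewrite E1, E2. lra. }
    apply Hr.
    + intros; apply Hs; simpl; auto.
    + intros b' Hb'. unfold refine in Hb'. apply in_flat_map in Hb'. destruct Hb' as [b [Hb1 Hb2]].
      simpl in Hb2. destruct Hb2 as [<-|[<-|[]]]; simpl; [apply meas_inter|apply meas_diff]; auto.
    + intro w. rewrite <- (Hpart w). clear. unfold refine. induction part as [|b part IHp]; simpl. ring.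
      rewrite <- IHp.
      destruct (classic (snd b w)); destruct (classic (A w));
          [rewrite (indic_true (fun w => _ /\ A w)) by tauto|rewrite (indic_false (fun w => _ /\ A w)) by tauto ..];
          try rewrite (indic_true (fun w => _ /\ ~ A w)) by tauto; try rewrite (indic_false (fun w => _ /\ ~ A w)) by tauto;
          try rewrite (indic_true (snd b)) by tauto; try rewrite (indic_false (snd b)) by tauto; ring.
    + intros b' Hb' w Hw. unfold refine in Hb'. apply in_flat_map in Hb'. destruct Hb' as [b [Hb1 Hb2]].
      specialize (Hb b Hb1 w). simpl in Hb.
      simpl in Hb2. destruct Hb2 as [<-|[<-|[]]]; simpl in *.
      * rewrite indic_true in Hb by tauto. destruct Hw. specialize (Hb H). lra.
      * rewrite indic_false in Hb by tauto. destruct Hw. specialize (Hb H). lra.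
Qed.

Lemma lub_upper Y l M : expect_is P Y l ->
  (forall s, valid s -> (forall w, simple_val s w <= Y w) -> simple_int P s <= M) -> l <= M.
Proof.
  intros [_ Hl] H. apply Hl. intros r [s [Hv [Hsv ->]]]. apply H; auto.
Qed.

Lemma lub_lower Y l s : expect_is P Y l -> valid s -> (forall w, simple_val s w <= Y w) ->
  simple_int P s <= l.
Proof. intros [Hl _] Hv Hs. apply Hl. exists s; auto. Qed.

End Prob.

Definition pik (k : nat) (x : R) := x ^ k / INR (fact k) * exp (- x).

Lemma sum_mono (a : nat -> R) K1 K2 : (forall k, 0 <= a k) -> (K1 <= K2)%nat ->
  sum_f_R0 a K1 <= sum_f_R0 a K2.
Proof.
  intros Ha HK. induction HK. lra. simpl. specialize (Ha (S m)). lra.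
Qed.

Lemma sum_swap (b : nat -> nat -> R) K N :
  sum_f_R0 (fun k => sum_f_R0 (fun j => b k j) N) K = sum_f_R0 (fun j => sum_f_R0 (fun k => b k j) K) N.
Proof.
  induction K; simpl.
  - reflexivity.
  - rewrite IHK. rewrite <- sum_plus. apply sum_eq. intros; simpl. reflexivity.
Qed.

Lemma pik_nonneg k x : 0 <= x -> 0 <= pik k x.
Proof.
  intro Hx. unfold pik. apply Rmult_le_pos. apply Rmult_le_pos. apply pow_le; auto.
  left; apply Rinv_0_lt_compat, lt_0_INR, lt_O_fact. left; apply exp_pos.
Qed.

Lemma pik_lower k y x d : 0 <= y -> y <= x -> x <= y + d -> exp (- d) * pik k y <= pik k x.
Proof.
  intros Hy Hyx Hxd. unfold pik.
  assert (H1 : y ^ k <= x ^ k) by (apply pow_incr; lra).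
  assert (H2 : exp (- d) * exp (- y) <= exp (- x)).
  { rewrite <- exp_plus. destruct (Req_dec (- d + - y) (- x)) as [->|]; [lra|].
    left; apply exp_increasing; lra. }
  assert (Hf : 0 < / INR (fact k)) by (apply Rinv_0_lt_compat, lt_0_INR, lt_O_fact).
  assert (0 <= y ^ k) by (apply pow_le; auto).
  assert (0 < exp (-y)) by apply exp_pos. assert (0 < exp (-d)) by apply exp_pos.
  unfold Rdiv.
  replace (exp (- d) * (y ^ k * / INR (fact k) * exp (- y))) with
    ((y ^ k * / INR (fact k)) * (exp (- d) * exp (- y))) by ring.
  apply Rmult_le_compat; try nra.
Qed.

Section RV.
Variable P : prob_space.
Variable X : Omega P -> R.
Hypothesis HX : random_variable P X.
Hypothesis HX0 : forall w, 0 <= X w.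

Definition Fx a := Pr P (fun w => X w <= a).
Definition blk (d : R) (j : nat) := fun w => INR j * d - d < X w <= INR j * d.

Lemma meas_int a b : meas P (fun w => a < X w <= b).
Proof.
  apply (meas_ext P (fun w => X w <= b /\ ~ X w <= a)).
  - intro w; lra.
  - apply meas_diff; apply HX.
Qed.

Lemma meas_eq a : meas P (fun w => X w = a).
Proof.
  apply (meas_ext P (fun w => X w <= a /\ ~ (exists n : nat, (fun n w => X w <= a - / (INR n + 1)) n w))).
  - intro w. split.
    + intros [H1 H2]. destruct (Rle_dec a (X w)); [lra|]. exfalso; apply H2; clear H2.
      destruct (archimed_cor1 (a - X w) ltac:(lra)) as [m [Hn Hn0]].
      exists m. simpl. assert (0 < INR m) by (apply lt_0_INR; auto).
      assert (/ (INR m + 1) < / INR m) by (apply Rinv_lt_contravar; nra). lra.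
    + intro H. split; [lra|]. intros [n Hn]. simpl in Hn.
      assert (0 < / (INR n + 1)) by (apply Rinv_0_lt_compat; assert (0 <= INR n) by apply pos_INR; lra). lra.
  - apply meas_diff. apply HX. apply meas_cunion. intro n; apply HX.
Qed.

Lemma meas_blk d j : meas P (blk d j).
Proof. apply meas_int. Qed.

Lemma F_shell a b : a <= b -> Fx b = Fx a + Pr P (fun w => a < X w <= b).
Proof.
  intro Hab. unfold Fx. rewrite <- Pr_add.
  - apply Pr_ext. intro w; lra.
  - apply HX.
  - apply meas_int.
  - intros w; lra.
Qed.

Lemma F_mono a b : a <= b -> Fx a <= Fx b.
Proof. intro. rewrite (F_shell a b) by auto. assert (0 <= Pr P (fun w => a < X w <= b)) by (apply Pr_nonneg, meas_int). lra. Qed.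

Lemma blk_disj d i j w : 0 < d -> i <> j -> blk d i w -> blk d j w -> False.
Proof.
  intros Hd Hij Hi Hj. unfold blk in *.
  destruct (Nat.lt_ge_cases i j) as [H|H].
  - assert (INR (S i) <= INR j) by (apply le_INR; lia). rewrite S_INR in H0. nra.
  - assert (INR (S j) <= INR i) by (apply le_INR; lia). rewrite S_INR in H0. nra.
Qed.

Lemma sum_blk d N : 0 < d -> sum_f_R0 (fun j => Pr P (blk d j)) N = Fx (INR N * d).
Proof.
  intro Hd. induction N; simpl sum_f_R0.
  - unfold Fx, blk. apply Pr_ext. intro w. simpl. specialize (HX0 w). lra.
  - rewrite IHN. rewrite (F_shell (INR N * d) (INR (S N) * d)).
    + f_equal. apply Pr_ext. intro w. unfold blk. rewrite S_INR. lra.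
    + rewrite S_INR. lra.
Qed.

Lemma blk_cover w : exists j, blk 1 j w.
Proof.
  destruct (INR_unbounded (X w)) as [m Hm].
  assert (forall m, X w <= INR m -> exists j, blk 1 j w).
  { clear m Hm. induction m; intro H.
    - exists 0%nat. unfold blk. simpl in *. specialize (HX0 w). lra.
    - destruct (Rle_dec (X w) (INR m)). auto.
      exists (S m). unfold blk. rewrite S_INR in *. lra. }
  apply (H m). lra.
Qed.

Lemma F_lim : Un_cv (fun N => Fx (INR N)) 1.
Proof.
  assert (H := Pr_sigma_additive P (blk 1) (meas_blk 1)).
  assert (Hd : forall m n w, m <> n -> blk 1 m w -> blk 1 n w -> False)
    by (intros; eapply blk_disj; eauto; lra).
  specialize (H Hd).
  rewrite (Pr_ext P (fun w => exists n, blk 1 n w) (fun _ => True)) in H.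
  - rewrite Pr_full in H. intros e He. destruct (H e He) as [N HN]. exists N. intros n Hn.
    specialize (HN n Hn). rewrite sum_blk in HN by lra. rewrite Rmult_1_r in HN. auto.
  - intro w; split; auto. intros _. apply blk_cover.
Qed.

Lemma F_le1 a : Fx a <= 1.
Proof. apply Pr_le1, HX. Qed.

Lemma F_tail e : 0 < e -> exists A, 0 <= A /\ forall b, A <= b -> 1 - e <= Fx b.
Proof.
  intro He. destruct (F_lim e He) as [N HN]. exists (INR N). split. apply pos_INR.
  intros b Hb. specialize (HN N (Nat.le_refl _)). unfold R_dist in HN. apply Rabs_def2 in HN.
  assert (Fx (INR N) <= Fx b) by (apply F_mono; auto). lra.
Qed.

Fixpoint blist (d : R) (f : nat -> R) (N : nat) : list (R * (Omega P -> Prop)) :=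
  match N with
  | 0%nat => (f 0%nat, blk d 0) :: nil
  | S n => (f (S n), blk d (S n)) :: blist d f n
  end.

Lemma blist_int d f N : simple_int P (blist d f N) = sum_f_R0 (fun j => f j * Pr P (blk d j)) N.
Proof.
  induction N; simpl. ring. simpl in IHN. rewrite IHN. ring.
Qed.

Lemma blist_valid d f N : (forall j, 0 <= f j) -> valid P (blist d f N).
Proof.
  intros Hf. induction N; intros p Hp; simpl in Hp.
  - destruct Hp as [<-|[]]. split; simpl; auto. apply meas_blk.
  - destruct Hp as [<-|Hp]. split; simpl; auto. apply meas_blk. apply IHN; auto.
Qed.

Lemma blist_zero d f N w : (forall j, (j <= N)%nat -> ~ blk d j w) -> simple_val (blist d f N) w = 0.
Proof.
  induction N; intro H; simpl.
  - rewrite indic_false by (apply H; lia). ring.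
  - rewrite indic_false by (apply H; lia). simpl in IHN. rewrite IHN. ring. intros; apply H; lia.
Qed.

Lemma blist_le d f N (Y : Omega P -> R) w : 0 < d -> 0 <= Y w ->
  (forall j, (j <= N)%nat -> blk d j w -> f j <= Y w) -> simple_val (blist d f N) w <= Y w.
Proof.
  intros Hd HY. induction N; intro H; simpl.
  - destruct (classic (blk d 0 w)).
    + rewrite indic_true by auto. specialize (H 0%nat (Nat.le_refl _) H0). lra.
    + rewrite indic_false by auto. lra.
  - destruct (classic (blk d (S N) w)).
    + rewrite indic_true by auto. simpl in *.
      rewrite blist_zero. specialize (H (S N) (Nat.le_refl _) H0). lra.
      intros j Hj Hb. eapply blk_disj; [exact Hd| |exact Hb|exact H0]. lia.
    + rewrite indic_false by auto. simpl in IHN.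
      assert (simple_val (blist d f N) w <= Y w) by (apply IHN; intros; apply H; auto).
      simpl in H1. lra.
Qed.

Lemma pmf_nonneg Y l : (forall w, 0 <= Y w) -> expect_is P Y l -> 0 <= l.
Proof.
  intros HY H. change 0 with (simple_int P nil). apply (lub_lower P Y l nil H).
  intros p []. intros w. simpl. auto.
Qed.

End RV.

Section LBsec.
Variable P : prob_space.
Variable X : Omega P -> R.
Hypothesis HX : random_variable P X.
Hypothesis HX0 : forall w, 0 <= X w.
Variable p : nat -> R.
Hypothesis Hp : forall k, expect_is P (fun w => pik k (X w)) (p k).

Lemma p_nonneg k : 0 <= p k.
Proof. apply (pmf_nonneg P (fun w => pik k (X w))). intro; apply pik_nonneg, HX0. apply Hp. Qed.

Lemma p_lower_grid k d N : 0 < d ->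
  sum_f_R0 (fun j => exp (- d) * pik k (INR (pred j) * d) * Pr P (blk P X d j)) N <= p k.
Proof.
  intro Hd. rewrite <- (blist_int P X d (fun j => exp (- d) * pik k (INR (pred j) * d))).
  apply (lub_lower P (fun w => pik k (X w))). apply Hp.
  - apply (blist_valid P X HX). intro j. apply Rmult_le_pos. left; apply exp_pos. apply pik_nonneg.
    apply Rmult_le_pos. apply pos_INR. lra.
  - intro w. apply (blist_le P X d _ N (fun w => pik k (X w)) w); auto. apply pik_nonneg, HX0.
    intros j Hj Hb. unfold blk in Hb. apply pik_lower.
    + apply Rmult_le_pos. apply pos_INR. lra.
    + destruct j. { simpl in *. specialize (HX0 w). lra. } rewrite S_INR in Hb. simpl pred. lra.
    + destruct j. { simpl in *. lra. } rewrite S_INR in Hb. simpl pred. lra.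
Qed.

Lemma LB (Pc : nat -> R) (HPc : forall k, 0 <= Pc k) (c : R) (Hc : 0 <= c)
  (H : forall x, 0 <= x -> forall e, 0 < e -> exists K, c - e <= sum_f_R0 (fun k => Pc k * pik k x) K) :
  forall e, 0 < e -> exists K, c - e <= sum_f_R0 (fun k => Pc k * p k) K.
Proof.
  intros e He.
  assert (Hsn : forall K, 0 <= sum_f_R0 (fun k => Pc k * p k) K).
  { intro K; apply cond_pos_sum. intro k. apply Rmult_le_pos; auto. apply p_nonneg. }
  destruct (Rle_dec c e). { exists 0%nat. specialize (Hsn 0%nat). lra. }
  set (e1 := e / (4 * (c + 1))).
  assert (He1 : 0 < e1) by (unfold e1; apply Rdiv_lt_0_compat; lra).
  assert (He1' : e1 * (4 * (c + 1)) = e) by (unfold e1; field; lra).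
  destruct (F_tail P X HX HX0 e1 He1) as [A [HA HFA]].
  set (d := e1).
  assert (Hd : 0 < d) by (unfold d; lra).
  destruct (INR_unbounded (A / d)) as [N HN].
  assert (HNd : A <= INR N * d).
  { unfold d. apply Rmult_lt_compat_r with (r := e1) in HN; auto.
    unfold Rdiv in HN. rewrite Rmult_assoc, Rinv_l in HN by lra. lra. }
  assert (HK : forall M, exists K, forall j, (j <= M)%nat ->
             c - e1 <= sum_f_R0 (fun k => Pc k * pik k (INR (pred j) * d)) K).
  { induction M.
    - destruct (H (INR (pred 0) * d) ltac:(apply Rmult_le_pos; [apply pos_INR|lra]) e1 He1) as [K HK]. exists K.
      intros j Hj. replace j with 0%nat by lia. auto.
    - destruct IHM as [K1 HK1].
      destruct (H (INR (pred (S M)) * d) ltac:(apply Rmult_le_pos; [apply pos_INR|lra]) e1 He1) as [K2 HK2].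
      exists (Nat.max K1 K2). intros j Hj.
      assert (Hmon : forall K', (K' <= Nat.max K1 K2)%nat ->
        sum_f_R0 (fun k => Pc k * pik k (INR (pred j) * d)) K' <=
        sum_f_R0 (fun k => Pc k * pik k (INR (pred j) * d)) (Nat.max K1 K2)).
      { intros. apply sum_mono; auto. intro k. apply Rmult_le_pos; auto. apply pik_nonneg.
        apply Rmult_le_pos; [apply pos_INR|lra]. }
      destruct (Nat.eq_dec j (S M)) as [->|Hne].
      + eapply Rle_trans; [apply HK2|apply Hmon; lia].
      + assert (Hjm : (j <= M)%nat) by lia. eapply Rle_trans; [apply (HK1 j Hjm)|apply Hmon; lia]. }
  destruct (HK N) as [K HKN]. exists K.
  assert (Step1 : sum_f_R0 (fun k => Pc k *
     sum_f_R0 (fun j => exp (- d) * pik k (INR (pred j) * d) * Pr P (blk P X d j)) N) K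
     <= sum_f_R0 (fun k => Pc k * p k) K).
  { apply sum_Rle. intros k _. apply Rmult_le_compat_l; auto. apply p_lower_grid; auto. }
  assert (Step2 : sum_f_R0 (fun k => Pc k *
     sum_f_R0 (fun j => exp (- d) * pik k (INR (pred j) * d) * Pr P (blk P X d j)) N) K
     = sum_f_R0 (fun j => exp (- d) * Pr P (blk P X d j) *
           sum_f_R0 (fun k => Pc k * pik k (INR (pred j) * d)) K) N).
  { transitivity (sum_f_R0 (fun k => sum_f_R0 (fun j => Pc k * (exp (- d) * pik k (INR (pred j) * d) * Pr P (blk P X d j))) N) K).
    { apply sum_eq; intros k _. rewrite scal_sum. apply sum_eq; intros; ring. }
    rewrite (sum_swap (fun k j => Pc k * (exp (- d) * pik k (INR (pred j) * d) * Pr P (blk P X d j)))).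
    apply sum_eq; intros j _. rewrite scal_sum. apply sum_eq; intros; ring. }
  assert (Step3 : sum_f_R0 (fun j => exp (- d) * Pr P (blk P X d j) * (c - e1)) N <=
     sum_f_R0 (fun j => exp (- d) * Pr P (blk P X d j) *
           sum_f_R0 (fun k => Pc k * pik k (INR (pred j) * d)) K) N).
  { apply sum_Rle. intros j Hj. apply Rmult_le_compat_l. apply Rmult_le_pos. left; apply exp_pos.
    apply Pr_nonneg, (meas_blk P X HX). apply HKN; auto. }
  assert (Step4 : sum_f_R0 (fun j => exp (- d) * Pr P (blk P X d j) * (c - e1)) N =
                  exp (- d) * (c - e1) * Fx P X (INR N * d)).
  { rewrite <- (sum_blk P X HX HX0) by auto. rewrite scal_sum. apply sum_eq. intros; ring. }
  assert (HF : 1 - e1 <= Fx P X (INR N * d)) by (apply HFA; auto).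
  assert (Hexp : 1 - d <= exp (- d)) by (assert (H0 := exp_ineq1_le (- d)); lra).
  assert (e1 <= e / 4).
  { unfold e1. unfold Rdiv. apply Rmult_le_compat_l. lra. apply Rinv_le_contravar; lra. }
  assert (HF1 : Fx P X (INR N * d) <= 1) by apply (F_le1 P X HX).
  assert (Hfin : c - e <= exp (- d) * (c - e1) * Fx P X (INR N * d)).
  { assert (0 <= c - e1) by lra.
    assert (exp (- d) * (c - e1) * Fx P X (INR N * d) >= (1 - e1) * (c - e1) * (1 - e1)).
    { apply Rle_ge. apply Rmult_le_compat; try nra. apply Rmult_le_compat_r; unfold d in *; lra. }
    unfold d in *. nra. }
  lra.
Qed.

End LBsec.

Lemma infsum_ext (a b : nat -> R) l : (forall k, a k = b k) -> infinite_sum a l -> infinite_sum b l.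
Proof.
  intros Hab H e He. destruct (H e He) as [N HN]. exists N. intros n Hn.
  rewrite <- (sum_eq a b n) by auto. auto.
Qed.

Lemma infsum_scal (a : nat -> R) l c : infinite_sum a l -> infinite_sum (fun k => c * a k) (c * l).
Proof.
  intros H e He. destruct (Req_dec c 0) as [->|Hc].
  - exists 0%nat. intros n _. unfold R_dist.
    rewrite (sum_eq _ (fun _ => 0)) by (intros; ring).
    replace (sum_f_R0 (fun _ => 0) n) with 0. rewrite Rmult_0_l, Rminus_diag, Rabs_R0; auto.
    induction n; simpl; auto. rewrite <- IHn. ring.
  - assert (Hc' : 0 < Rabs c) by (apply Rabs_pos_lt; auto).
    destruct (H (e / Rabs c)) as [N HN]. apply Rdiv_lt_0_compat; auto.
    exists N. intros n Hn. specialize (HN n Hn). unfold R_dist in *.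
    rewrite <- (sum_eq (fun i => a i * c)) by (intros; ring). rewrite <- scal_sum.
    rewrite <- Rmult_minus_distr_l, Rabs_mult.
    apply Rmult_lt_reg_l with (/ Rabs c). apply Rinv_0_lt_compat; auto.
    rewrite <- Rmult_assoc, Rinv_l by lra. rewrite Rmult_1_l. unfold Rdiv in HN. lra.
Qed.

Lemma infsum_plus (a b : nat -> R) la lb : infinite_sum a la -> infinite_sum b lb ->
  infinite_sum (fun k => a k + b k) (la + lb).
Proof.
  intros Ha Hb e He. destruct (Ha (e/2)) as [N1 H1]; [lra|]. destruct (Hb (e/2)) as [N2 H2]; [lra|].
  exists (Nat.max N1 N2). intros n Hn. unfold R_dist in *. rewrite sum_plus.
  specialize (H1 n ltac:(lia)). specialize (H2 n ltac:(lia)).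
  replace (sum_f_R0 a n + sum_f_R0 b n - (la + lb)) with ((sum_f_R0 a n - la) + (sum_f_R0 b n - lb)) by ring.
  eapply Rle_lt_trans; [apply Rabs_triang|]. lra.
Qed.

Definition shift (a : nat -> R) (k : nat) := match k with 0%nat => 0 | S j => a j end.

Lemma sum_shift a n : sum_f_R0 (shift a) (S n) = sum_f_R0 a n.
Proof. induction n; simpl in *. ring. rewrite IHn. reflexivity. Qed.

Lemma infsum_shift (a : nat -> R) l : infinite_sum a l -> infinite_sum (shift a) l.
Proof.
  intros H e He. destruct (H e He) as [N HN]. exists (S N). intros n Hn.
  destruct n. lia. rewrite sum_shift. apply HN. lia.
Qed.

Lemma infsum_first c : infinite_sum (fun k => match k with 0%nat => c | _ => 0 end) c.
Proof.
  intros e He. exists 0%nat. intros n _. unfold R_dist.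
  replace (sum_f_R0 (fun k => match k with 0%nat => c | _ => 0 end) n) with c.
  rewrite Rminus_diag, Rabs_R0; auto.
  induction n; simpl; auto. rewrite <- IHn. ring.
Qed.

Lemma infsum_le (a : nat -> R) l K : (forall k, 0 <= a k) -> infinite_sum a l -> sum_f_R0 a K <= l.
Proof.
  intros Ha H. apply (growing_ineq (sum_f_R0 a)).
  - intro n. simpl. specialize (Ha (S n)). lra.
  - exact H.
Qed.

Lemma infsum_lb (a : nat -> R) l : infinite_sum a l -> forall e, 0 < e -> exists K, l - e <= sum_f_R0 a K.
Proof.
  intros H e He. destruct (H e He) as [N HN]. exists N. specialize (HN N (Nat.le_refl _)).
  unfold R_dist in HN. apply Rabs_def2 in HN. lra.
Qed.

Lemma exp_series y : infinite_sum (fun k => y ^ k / INR (fact k)) (exp y).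
Proof.
  apply (infsum_ext (fun i => / INR (fact i) * y ^ i)). intros; unfold Rdiv; ring.
  unfold exp. destruct (exist_exp y) as [l Hl]. simpl. exact Hl.
Qed.

Lemma fact_S_div j : INR (S j) / INR (fact (S j)) = / INR (fact j).
Proof.
  rewrite fact_simpl, mult_INR. field. split. apply INR_fact_neq_0. apply not_0_INR. lia.
Qed.

Lemma pik_S j x : INR (S j) * pik (S j) x = x * pik j x.
Proof.
  unfold pik. rewrite fact_simpl, mult_INR. simpl pow. field.
  split. apply INR_fact_neq_0. apply not_0_INR. lia.
Qed.

Lemma ser_z z x : infinite_sum (fun k => z ^ k * pik k x) (exp (- x) * exp (z * x)).
Proof.
  apply (infsum_ext (fun k => exp (- x) * ((z * x) ^ k / INR (fact k)))).
  - intro k. unfold pik. rewrite Rpow_mult_distr. field. apply INR_fact_neq_0.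
  - exact (infsum_scal _ _ _ (exp_series (z * x))).
Qed.

Lemma ser_one x : infinite_sum (fun k => pik k x) 1.
Proof.
  assert (H := ser_z 1 x).
  replace (exp (- x) * exp (1 * x)) with 1 in H by (rewrite Rmult_1_l, Rmult_comm; symmetry; apply exp_neg_mul).
  eapply infsum_ext; [|exact H]. intro; cbv beta; rewrite pow1; ring.
Qed.

Lemma ser_mean x : infinite_sum (fun k => INR k * pik k x) x.
Proof.
  apply (infsum_ext (shift (fun j => x * pik j x))).
  - intro k. destruct k; simpl shift. unfold pik; simpl; ring. rewrite pik_S; ring.
  - apply infsum_shift. assert (H := infsum_scal _ _ x (ser_one x)). rewrite Rmult_1_r in H. exact H.
Qed.

Lemma ser_zd z x : infinite_sum (fun k => INR k * z ^ (pred k) * pik k x) (x * (exp (- x) * exp (z * x))).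
Proof.
  apply (infsum_ext (shift (fun j => x * (z ^ j * pik j x)))).
  - intro k. destruct k; simpl shift. unfold pik; simpl; ring.
    simpl pred. replace (INR (S k) * z ^ k * pik (S k) x) with (z ^ k * (INR (S k) * pik (S k) x)) by ring.
    rewrite pik_S. ring.
  - apply infsum_shift. exact (infsum_scal _ _ x (ser_z z x)).
Qed.

Lemma infsum_ge (a : nat -> R) l c : (forall k, 0 <= a k) -> infinite_sum a l ->
  (forall e, 0 < e -> exists K, c - e <= sum_f_R0 a K) -> c <= l.
Proof.
  intros Ha Hl H. destruct (Rle_dec c l) as [|Hn]; auto. exfalso.
  destruct (H ((c - l) / 2)) as [K HK]. lra.
  assert (sum_f_R0 a K <= l) by (apply infsum_le; auto). lra.
Qed.

Lemma sb_shift (p : nat -> R) mu z : mu <> 0 -> sb_gen_fun p mu z z ->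
  infinite_sum (fun k => INR k * z ^ (pred k) * p k) (mu * z).
Proof.
  intros Hmu H. unfold sb_gen_fun in H.
  apply (infsum_ext (shift (fun j => mu * (INR (S j) * p (S j) / mu * z ^ j)))).
  - intro k; destruct k; unfold shift. simpl; ring. change (pred (S k)) with k. field; auto.
  - apply infsum_shift. exact (infsum_scal _ _ mu H).
Qed.

Section MBsec.
Variable P : prob_space.
Variable X : Omega P -> R.
Hypothesis HX : random_variable P X.
Hypothesis HX0 : forall w, 0 <= X w.
Variable p : nat -> R.
Hypothesis Hp : forall k, expect_is P (fun w => pik k (X w)) (p k).

Lemma MB (mu z q y0 : R) : 0 < mu -> pmf_mean p mu -> 0 <= z <= 1 -> sb_gen_fun p mu z z ->
  gen_fun p z q -> 1 <= y0 -> 1 + 2 * y0 <= exp y0 ->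
  let E := exp y0 in let D := E - 1 - y0 in let t := 1 - exp (- y0) in
  let al := 2 * t / D in let be := - / D in let ga := t * (E - 1 - 2 * y0) / D in
  let th := 1 - z in
  1 - ga - (al + be) * th * mu + be * th * mu * z <= q.
Proof.
  intros Hmu Hmean Hz Hsb Hq Hy0 He E D t al be ga th.
  assert (HE : 0 < E) by apply exp_pos.
  assert (HD : 0 < D) by (unfold D, E; lra).
  assert (Ht : t = 1 - / E) by (unfold t, E; rewrite exp_Ropp; reflexivity).
  assert (HE3 : 3 <= E) by (unfold E; lra).
  assert (HiE : / E <= / 3) by (apply Rinv_le_contravar; lra).
  assert (HiE0 : 0 < / E) by (apply Rinv_0_lt_compat; lra).
  assert (Halbe : 0 <= al + be).
  { unfold al, be. replace (2 * t / D + - / D) with ((2 * t - 1) / D) by (field; lra).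
    apply Rmult_le_pos; [rewrite Ht; lra| left; apply Rinv_0_lt_compat; lra]. }
  assert (Hbe : 0 <= - be) by (unfold be; rewrite Ropp_involutive; left; apply Rinv_0_lt_compat; lra).
  assert (Hga0 : 0 <= ga).
  { unfold ga. apply Rmult_le_pos. apply Rmult_le_pos. rewrite Ht; lra. unfold E; lra.
    left; apply Rinv_0_lt_compat; lra. }
  assert (Hga1 : ga <= 1).
  { unfold ga. unfold Rdiv. rewrite Rmult_assoc. 
    assert ((E - 1 - 2 * y0) * / D <= 1).
    { apply Rmult_le_reg_r with D; auto. rewrite Rmult_assoc, Rinv_l by lra. unfold D. lra. }
    assert (0 <= (E - 1 - 2 * y0) * / D) by (apply Rmult_le_pos; [unfold E; lra| left; apply Rinv_0_lt_compat; lra]).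
    rewrite Ht. nra. }
  assert (Hth : 0 <= th <= 1) by (unfold th; lra).
  set (c1 := (al + be) * th). set (c2 := - be * th).
  assert (Hc1 : 0 <= c1) by (unfold c1; nra). assert (Hc2 : 0 <= c2) by (unfold c2; nra).
  set (Pc := fun k => c1 * INR k + c2 * (INR k * z ^ (pred k)) + z ^ k).
  assert (HPc : forall k, 0 <= Pc k).
  { intro k. unfold Pc. assert (0 <= INR k) by apply pos_INR.
    assert (0 <= z ^ pred k) by (apply pow_le; lra). assert (0 <= z ^ k) by (apply pow_le; lra).
    assert (0 <= INR k * z ^ pred k) by (apply Rmult_le_pos; auto). nra. }
  assert (Hser : infinite_sum (fun k => Pc k * p k) (c1 * mu + c2 * (mu * z) + q)).
  { apply (infsum_ext (fun k => (c1 * (INR k * p k) + c2 * (INR k * z ^ (pred k) * p k)) + p k * z ^ k)).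
    - intro k; unfold Pc; ring.
    - apply infsum_plus. apply infsum_plus. exact (infsum_scal _ _ c1 Hmean).
      exact (infsum_scal _ _ c2 (sb_shift p mu z ltac:(lra) Hsb)). exact Hq. }
  cut (1 - ga <= c1 * mu + c2 * (mu * z) + q).
  { unfold c1, c2. intro. nra. }
  apply (infsum_ge _ _ _ (fun k => Rmult_le_pos _ _ (HPc k) (p_nonneg P X HX0 p Hp k)) Hser).
  apply (LB P X HX HX0 p Hp Pc HPc (1 - ga) ltac:(lra)).
  intros x Hx e He0.
  assert (Hs : infinite_sum (fun k => Pc k * pik k x)
                 (c1 * x + c2 * (x * (exp (- x) * exp (z * x))) + exp (- x) * exp (z * x))).
  { apply (infsum_ext (fun k => (c1 * (INR k * pik k x) + c2 * (INR k * z ^ (pred k) * pik k x)) + z ^ k * pik k x)).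
    - intro k; unfold Pc; ring.
    - apply infsum_plus. apply infsum_plus. exact (infsum_scal _ _ c1 (ser_mean x)).
      exact (infsum_scal _ _ c2 (ser_zd z x)). exact (ser_z z x). }
  destruct (infsum_lb _ _ Hs e He0) as [K HK]. exists K.
  cut (1 - ga <= c1 * x + c2 * (x * (exp (- x) * exp (z * x))) + exp (- x) * exp (z * x)); [lra|].
  assert (Hexp : exp (- x) * exp (z * x) = exp (- (th * x))) by (rewrite <- exp_plus; f_equal; unfold th; ring).
  rewrite Hexp.
  assert (HPW := PW y0 (th * x) Hy0 He ltac:(apply Rmult_le_pos; lra)). cbv zeta in HPW.
  fold E D t in HPW. fold al in HPW. 
  replace (- / D) with be in HPW by reflexivity.
  replace (t * (E - 1 - 2 * y0) / D) with ga in HPW by reflexivity.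
  unfold c1, c2. nra.
Qed.

End MBsec.

Lemma pik_le1 k x : 0 <= x -> pik k x <= 1.
Proof.
  intro Hx. apply Rle_trans with (sum_f_R0 (fun j => pik j x) k).
  - destruct k. simpl; lra. simpl. assert (0 <= sum_f_R0 (fun j => pik j x) k).
    apply cond_pos_sum. intro; apply pik_nonneg; auto. lra.
  - apply infsum_le. intro; apply pik_nonneg; auto. apply ser_one.
Qed.

Section Star.
Variable P : prob_space.
Variable X : Omega P -> R.
Hypothesis HX : random_variable P X.
Hypothesis HX0 : forall w, 0 <= X w.
Variables M pr : R.
Hypothesis HM : 0 < M.
Hypothesis HPM : Pr P (fun w => X w = M) = pr.
Hypothesis HP0 : 1 - Pr P (fun w => X w = 0) = pr.

Definition Nset := fun w => ~ X w = 0 /\ ~ X w = M.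

Lemma meas_N : meas P Nset.
Proof. apply meas_inter; apply meas_compl; apply (meas_eq P X HX). Qed.

Lemma PrN : Pr P Nset = 0.
Proof.
  assert (H := FA P ((fun w => X w = 0) :: (fun w => X w = M) :: Nset :: nil) (fun _ => True)).
  simpl in H. rewrite Pr_full in H.
  assert (Pr P (fun w => X w = 0) + (Pr P (fun w => X w = M) + (Pr P Nset + 0)) = 1).
  { apply H.
    - repeat constructor; try apply (meas_eq P X HX). apply meas_N.
    - apply meas_full.
    - intro w. rewrite (indic_true (fun _ : Omega P => True) w I). unfold sumind. simpl. unfold Nset.
      destruct (Req_dec (X w) 0) as [E0|E0].
      + rewrite (indic_true (fun w => X w = 0)) by auto.
        rewrite (indic_false (fun w => X w = M)) by (intro; lra).
        rewrite (indic_false (fun w => _ /\ _)) by tauto. ring.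
      + rewrite (indic_false (fun w => X w = 0)) by auto.
        destruct (Req_dec (X w) M) as [EM|EM].
        * rewrite (indic_true (fun w => X w = M)) by auto.
          rewrite (indic_false (fun w => _ /\ _)) by tauto. ring.
        * rewrite (indic_false (fun w => X w = M)) by auto.
          rewrite (indic_true (fun w => _ /\ _)) by tauto. ring. }
  lra.
Qed.

Lemma pstar_val k l : expect_is P (fun w => pik k (X w)) l -> l = (1 - pr) * pik k 0 + pr * pik k M.
Proof.
  intro H.
  set (s0 := (pik k 0, fun w => X w = 0) :: (pik k M, fun w => X w = M) :: nil).
  assert (Hint : simple_int P s0 = (1 - pr) * pik k 0 + pr * pik k M).
  { unfold s0; simpl. rewrite HPM. replace (Pr P (fun w => X w = 0)) with (1 - pr) by lra. ring. }
  assert (Hv : valid P s0).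
  { intros b Hb. unfold s0 in Hb. simpl in Hb. destruct Hb as [<-|[<-|[]]]; simpl; split;
      try apply pik_nonneg; try lra; apply (meas_eq P X HX). }
  assert (Hle : forall w, simple_val s0 w <= pik k (X w)).
  { intro w. unfold s0; simpl. destruct (Req_dec (X w) 0) as [E0|E0].
    - rewrite (indic_true (fun w => X w = 0)) by auto. rewrite (indic_false (fun w => X w = M)) by (intro; lra).
      rewrite E0; lra.
    - rewrite (indic_false (fun w => X w = 0)) by auto. destruct (Req_dec (X w) M) as [EM|EM].
      + rewrite (indic_true (fun w => X w = M)) by auto. rewrite EM; lra.
      + rewrite (indic_false (fun w => X w = M)) by auto. assert (H0 := pik_nonneg k (X w) (HX0 w)). lra. }
  apply Rle_antisym.
  - rewrite <- Hint. apply (lub_upper P _ _ _ H). intros s Hs Hsle.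
    set (part := (pik k 0, fun w => X w = 0) :: (pik k M, fun w => X w = M) :: (1, Nset) :: nil).
    apply Rle_trans with (simple_int P part).
    + apply partition_lemma.
      * intros; apply Hs; auto.
      * intros b Hb. unfold part in Hb; simpl in Hb. destruct Hb as [<-|[<-|[<-|[]]]]; simpl;
          try apply (meas_eq P X HX). apply meas_N.
      * intro w. unfold part, sumind; simpl. unfold Nset.
        destruct (Req_dec (X w) 0) as [E0|E0].
        -- rewrite (indic_true (fun w => X w = 0)) by auto.
           rewrite (indic_false (fun w => X w = M)) by (intro; lra).
           rewrite (indic_false (fun w => _ /\ _)) by tauto. ring.
        -- rewrite (indic_false (fun w => X w = 0)) by auto.
           destruct (Req_dec (X w) M) as [EM|EM].
           ++ rewrite (indic_true (fun w => X w = M)) by auto.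
              rewrite (indic_false (fun w => _ /\ _)) by tauto. ring.
           ++ rewrite (indic_false (fun w => X w = M)) by auto.
              rewrite (indic_true (fun w => _ /\ _)) by tauto. ring.
      * intros b Hb w Hw. unfold part in Hb; simpl in Hb. specialize (Hsle w).
        destruct Hb as [<-|[<-|[<-|[]]]]; simpl in *.
        -- rewrite Hw in Hsle; auto.
        -- rewrite Hw in Hsle; auto.
        -- assert (H0 := pik_le1 k (X w) (HX0 w)). lra.
    + unfold part, s0. simpl. rewrite PrN, HPM. replace (Pr P (fun w => X w = 0)) with (1 - pr) by lra.
      lra.
  - rewrite <- Hint. apply (lub_lower P _ _ s0 H Hv Hle).
Qed.

End Star.

Definition phi (M t : R) := 1 - t - exp (- (M * t)).

Lemma phi_cont M : continuity (phi M).
Proof.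
  intro x. apply (dl_cont _ x (0 - 1 - (- M) * exp (- M * x + 0))).
  unfold phi. eapply dl_ext. 3: apply (dl_minus (fun t => 1 - t) (fun t => exp (- M * t + 0))).
  - intro y. cbv beta. replace (- M * y + 0) with (- (M * y)) by ring. reflexivity.
  - reflexivity.
  - apply (dl_minus (fun _ => 1) (fun t => t)). apply dl_const. apply dl_id.
  - apply dl_explin.
Qed.

Lemma sup_root M : exists L, 0 <= L <= 1 /\ phi M L = 0 /\
  (forall t, 0 <= t <= 1 -> phi M t = 0 -> t <= L).
Proof.
  set (S := fun t => 0 <= t <= 1 /\ phi M t = 0).
  assert (HS0 : S 0).
  { split. lra. unfold phi. rewrite Rmult_0_r, Ropp_0, exp_0. ring. }
  destruct (completeness S) as [L [HL1 HL2]].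
  - exists 1. intros t [Ht _]. lra.
  - exists 0; auto.
  - assert (H0L : 0 <= L) by (apply HL1; auto).
    assert (HL1' : L <= 1) by (apply HL2; intros t [Ht _]; lra).
    exists L. split; [lra|]. split.
    + destruct (Req_dec (phi M L) 0) as [|Hn]; auto. exfalso.
      assert (He : 0 < Rabs (phi M L)) by (apply Rabs_pos_lt; auto).
      destruct (phi_cont M L (Rabs (phi M L)) He) as [alp [Halp Hc]].
      destruct (classic (exists t, S t /\ L - alp < t)) as [[t [Ht Hlt]]|Hno].
      * assert (Htl : t <= L) by (apply HL1; auto).
        destruct (Req_dec t L) as [->|Hne]. { destruct Ht as [_ Ht]. contradiction. }
        assert (Hd := Hc t). simpl in Hd. unfold R_dist in Hd.
        destruct Ht as [_ Ht]. rewrite Ht in Hd.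
        assert (Rabs (0 - phi M L) < Rabs (phi M L)).
        { apply Hd. split. split. exact I. auto. rewrite Rabs_left1; lra. }
        rewrite Rminus_0_l, Rabs_Ropp in H. lra.
      * assert (L <= L - alp).
        { apply HL2. intros t Ht. destruct (Rle_dec t (L - alp)); auto. exfalso; apply Hno.
          exists t; split; auto; lra. }
        lra.
    + intros t Ht Hp. apply HL1. split; auto.
Qed.

Lemma Rdiv_le_0_compat a b : 0 <= a -> 0 < b -> 0 <= a / b.
Proof. intros. unfold Rdiv. apply Rmult_le_pos; auto. left; apply Rinv_0_lt_compat; auto. Qed.

Theorem theorem3p1 :
  forall (mu muc : R), 0 < mu ->
  (* muc is the largest real root of 2x = e^{x - 1/2} *)
  2 * muc = exp (muc - 1/2) ->
  (forall x : R, 2 * x = exp (x - 1/2) -> x <= muc) ->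
  (* Xstar on a probability space P0, with
     P(Xstar = max(mu,muc)) = 1 - P(Xstar = 0) = min(1, mu/muc),
     and Dstar mixed Poisson(Xstar) with pmf pstar *)
  forall (P0 : prob_space) (Xstar : Omega P0 -> R) (pstar : nat -> R),
    random_variable P0 Xstar -> (forall w, 0 <= Xstar w) ->
    Pr P0 (fun w => Xstar w = Rmax mu muc) = Rmin 1 (mu / muc) ->
    1 - Pr P0 (fun w => Xstar w = 0) = Rmin 1 (mu / muc) ->
    mixed_poisson_pmf P0 Xstar pstar ->
  (* min_{D in D_mu} q_D = q_{D*} *)
    in_D_mu mu pstar /\
    exists qstar : R, is_qD pstar qstar /\
      forall (p : nat -> R) (q : R), in_D_mu mu p -> is_qD p q -> qstar <= q.
Proof.
  intros mu muc Hmu Hroot Hmax P0 X pstar HX HX0 HPM HP0 Hpmf.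
  assert (Hf0 : fmu muc = 0) by (unfold fmu; lra).
  assert (Hfmax : forall x, fmu x = 0 -> x <= muc) by (intros x Hx; apply Hmax; unfold fmu in Hx; lra).
  assert (Hmuc : 3/2 <= muc) by (apply muc_ge; auto).
  set (y0c := muc - 1/2).
  assert (Hy0c : 1 <= y0c) by (unfold y0c; lra).
  assert (HEc : exp y0c = 2 * muc) by (unfold y0c; lra).
  assert (HEc' : exp (- y0c) = / (2 * muc)) by (rewrite exp_Ropp, HEc; reflexivity).
  set (M := Rmax mu muc) in *. set (pr := Rmin 1 (mu / muc)) in *.
  assert (Hcase : (mu < muc /\ M = muc /\ pr = mu / muc) \/ (muc <= mu /\ M = mu /\ pr = 1)).
  { destruct (Rlt_le_dec mu muc) as [Hlt|Hle].
    - left. split; auto. split. unfold M; apply Rmax_right; lra.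
      unfold pr; apply Rmin_right. apply Rmult_le_reg_r with muc. lra.
      unfold Rdiv; rewrite Rmult_assoc, Rinv_l by lra. lra.
    - right. split; auto. split. unfold M; apply Rmax_left; lra.
      unfold pr; apply Rmin_left. apply Rmult_le_reg_r with muc. lra.
      unfold Rdiv; rewrite Rmult_assoc, Rinv_l by lra. lra. }
  assert (HprM : pr * M = mu).
  { destruct Hcase as [[_ [-> ->]]|[_ [-> ->]]]. field; lra. ring. }
  assert (HM : muc <= M) by (destruct Hcase as [[_ [-> _]]|[? [-> _]]]; lra).
  assert (Hpr : 0 < pr <= 1).
  { destruct Hcase as [[? [_ ->]]|[_ [_ ->]]]; [|lra]. split.
    apply Rdiv_lt_0_compat; lra. apply Rmult_le_reg_r with muc. lra.
    unfold Rdiv; rewrite Rmult_assoc, Rinv_l by lra. lra. }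
  assert (HMpos : 0 < M) by lra.
  assert (Hpstar : forall k, pstar k = (1 - pr) * pik k 0 + pr * pik k M).
  { intro k. apply (pstar_val P0 X HX HX0 M pr HMpos HPM HP0). exact (Hpmf k). }
  assert (Hmean : pmf_mean pstar mu).
  { unfold pmf_mean.
    apply (infsum_ext (fun k => (1 - pr) * (INR k * pik k 0) + pr * (INR k * pik k M))).
    - intro k; rewrite Hpstar; ring.
    - rewrite <- HprM. replace (pr * M) with ((1 - pr) * 0 + pr * M) by ring.
      apply infsum_plus; apply infsum_scal; apply ser_mean. }
  assert (Hpik0 : forall k, pik (S k) 0 = 0).
  { intro k. unfold pik. rewrite pow_i by lia. unfold Rdiv. ring. }
  assert (Hsb : forall s, sb_gen_fun pstar mu s (exp (- M) * exp (s * M))).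
  { intro s. unfold sb_gen_fun.
    apply (infsum_ext (fun k => s ^ k * pik k M)).
    - intro k. rewrite Hpstar, Hpik0.
      replace (INR (S k) * ((1 - pr) * 0 + pr * pik (S k) M) / mu * s ^ k) with
        (pr * (INR (S k) * pik (S k) M) / mu * s ^ k) by (unfold Rdiv; ring).
      rewrite pik_S. rewrite <- HprM. field. split; lra.
    - replace (s * M) with (s * M) by ring. apply ser_z. }
  assert (Hgen : forall s, gen_fun pstar s ((1 - pr) + pr * (exp (- M) * exp (s * M)))).
  { intro s. unfold gen_fun.
    apply (infsum_ext (fun k => (1 - pr) * (s ^ k * pik k 0) + pr * (s ^ k * pik k M))).
    - intro k; rewrite Hpstar; ring.
    - replace (1 - pr) with ((1 - pr) * (exp (- 0) * exp (s * 0))) at 1.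
      apply infsum_plus; apply infsum_scal; apply ser_z.
      rewrite Rmult_0_r, Ropp_0, exp_0. ring. }
  destruct (sup_root M) as [L [HL01 [HLroot HLmax]]].
  assert (HeL : exp (- (M * L)) = 1 - L) by (unfold phi in HLroot; lra).
  assert (HeL' : exp (- M) * exp ((1 - L) * M) = 1 - L).
  { rewrite <- exp_plus. rewrite <- HeL at 2. f_equal. ring. }
  split.
  { exists P0, X. split; [exact HX|split; [exact HX0|split; [exact Hpmf|exact Hmean]]]. }
  exists (1 - pr * L). split.
  { exists mu, (1 - L). split; auto. split; [lra|]. split.
    - rewrite <- HeL' at 2. apply Hsb.
    - split.
      + intros s Hs Hss. assert (Hu := uniqueness_sum _ _ _ Hss (Hsb s)).
        cut (1 - s <= L); [lra|]. apply HLmax. lra. unfold phi.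
        rewrite Hu at 1. rewrite <- exp_plus. 
        replace (- M + s * M) with (- (M * (1 - s))) by ring. ring.
      + replace (1 - pr * L) with ((1 - pr) + pr * (exp (- M) * exp ((1 - L) * M))) by (rewrite HeL'; ring).
        apply Hgen. }
  intros p q [P [X' [HX' [HX0' [Hpmf' Hmean']]]]] [muD [z [HmD [Hz [Hsbp [Hmin Hq]]]]]].
  assert (HmuD : muD = mu) by (apply (uniqueness_sum _ _ _ HmD Hmean')). subst muD.
  assert (Hp' : forall k, expect_is P (fun w => pik k (X' w)) (p k)) by (intro k; exact (Hpmf' k)).
  destruct Hcase as [[Hlt [HMe Hpre]]|[Hle [HMe Hpre]]].
  -
    set (tau := y0c / muc).
    assert (Htau : phi M tau = 0).
    { unfold phi, tau. rewrite HMe. replace (- (muc * (y0c / muc))) with (- y0c) by (field; lra).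
      rewrite HEc'. unfold y0c. field. lra. }
    assert (HtauL : tau <= L).
    { apply HLmax; auto. unfold tau, y0c. split. apply Rdiv_le_0_compat; lra.
      apply Rmult_le_reg_r with muc. lra. unfold Rdiv; rewrite Rmult_assoc, Rinv_l by lra. lra. }
    assert (HMB := MB P X' HX' HX0' p Hp' mu z q y0c Hmu Hmean' Hz Hsbp Hq Hy0c
                     ltac:(rewrite HEc; unfold y0c; lra)).
    cbv zeta in HMB. rewrite HEc, HEc' in HMB.
    set (th := 1 - z) in *.
    assert (Hid : 1 - (1 - / (2 * muc)) * (2 * muc - 1 - 2 * y0c) / (2 * muc - 1 - y0c) -
       (2 * (1 - / (2 * muc)) / (2 * muc - 1 - y0c) + - / (2 * muc - 1 - y0c)) * th * mu +
       - / (2 * muc - 1 - y0c) * th * mu * z = 1 - 2 * th * mu / muc + th * th * mu / y0c).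
    { unfold th, y0c. field. lra. }
    rewrite Hid in HMB.
    assert (Hsq : mu * y0c / (muc * muc) - (2 * th * mu / muc - th * th * mu / y0c) =
                  mu * (y0c - th * muc) * (y0c - th * muc) / (muc * muc * y0c)).
    { field. split; lra. }
    assert (0 <= mu * (y0c - th * muc) * (y0c - th * muc) / (muc * muc * y0c)).
    { apply Rdiv_le_0_compat. rewrite Rmult_assoc. apply Rmult_le_pos. lra. apply Rle_0_sqr.
      apply Rmult_lt_0_compat; [apply Rmult_lt_0_compat|]; lra. }
    assert (Hpl : mu * y0c / (muc * muc) <= pr * L).
    { rewrite Hpre. apply Rle_trans with (mu / muc * tau).
      - unfold tau. right. field. lra.
      - apply Rmult_le_compat_l; auto. apply Rdiv_le_0_compat; lra. }
    lra.
  -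
    set (t0 := y0c / mu).
    assert (Ht0 : 0 <= t0 <= 1).
    { unfold t0. split. apply Rdiv_le_0_compat; lra.
      apply Rmult_le_reg_r with mu. lra. unfold Rdiv; rewrite Rmult_assoc, Rinv_l by lra. unfold y0c; lra. }
    assert (Hphit0 : 0 <= phi M t0).
    { unfold phi, t0. rewrite HMe. replace (- (mu * (y0c / mu))) with (- y0c) by (field; lra).
      rewrite HEc'.
      assert (y0c / mu <= y0c / muc).
      { unfold Rdiv. apply Rmult_le_compat_l. lra. apply Rinv_le_contravar; lra. }
      assert (y0c / muc = 1 - / (2 * muc)) by (unfold y0c; field; lra). lra. }
    assert (Hphi1 : phi M 1 <= 0).
    { unfold phi. assert (0 < exp (- (M * 1))) by apply exp_pos. lra. }
    destruct (IVT_cor (phi M) t0 1 (phi_cont M) ltac:(lra) ltac:(nra)) as [r [Hr1 Hr2]].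
    assert (HrL : r <= L) by (apply HLmax; auto; lra).
    set (y0 := mu * L).
    assert (Hy0 : y0c <= y0).
    { unfold y0. apply Rle_trans with (mu * t0). unfold t0. right. field. lra.
      apply Rmult_le_compat_l; lra. }
    assert (He0 : 1 + 2 * y0 <= exp y0) by (apply (root_bound muc); auto; unfold y0c in Hy0; lra).
    assert (HMB := MB P X' HX' HX0' p Hp' mu z q y0 Hmu Hmean' Hz Hsbp Hq ltac:(lra) He0).
    cbv zeta in HMB.
    assert (Het : exp (- y0) = 1 - L) by (unfold y0; rewrite <- HMe; auto).
    rewrite Het in HMB. replace (1 - (1 - L)) with L in HMB by ring.
    set (E := exp y0) in *. set (th := 1 - z) in *.
    assert (HE3 : 3 <= E) by lra.
    assert (HD : 0 < E - 1 - y0) by lra.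
    assert (Hid : L - (L * (E - 1 - 2 * y0) / (E - 1 - y0) + (2 * L / (E - 1 - y0) + - / (E - 1 - y0)) * th * mu
                 - - / (E - 1 - y0) * th * mu * z) = mu * (L - th) * (L - th) / (E - 1 - y0)).
    { unfold th, y0. field. unfold y0 in HD. lra. }
    assert (0 <= mu * (L - th) * (L - th) / (E - 1 - y0)).
    { apply Rdiv_le_0_compat; [|lra]. rewrite Rmult_assoc. apply Rmult_le_pos. lra. apply Rle_0_sqr. }
    rewrite Hpre. lra.
Qed.
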